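(* Let $(X,d,f)$ be a topological dynamical system ($(X,d)$ compact metric, $f:X\to X$ continuous). Fix $\epsilon>0$, $\delta\in(0,1)$ and $n\in\mathbb N$. Then the function $\mathscr M_{\rm erg}(X,f)\to\mathbb R$, $\nu\mapsto N^\nu(n,\epsilon,\delta)$, is upper semi-continuous with respect to the weak* topology.
   Context: $\mathscr M_{\rm erg}(X,f)$ is the set of ergodic $f$-invariant Borel probability measures. $B_n(x,\epsilon)=\{y\in X:\max_{0\le i\le n-1}d(f^ix,f^iy)<\epsilon\}$. $N^\nu(n,\epsilon,\delta)$ is the minimal number of Bowen balls $B_n(x,\epsilon)$ whose union covers a set of $\nu$-measure larger than $1-\delta$. *)

(* Defs.v *)
From HB Require Import structures.
From mathcomp Require Import all_boot all_order all_algebra.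
From mathcomp Require Import all_classical all_reals all_analysis.
Set Implicit Arguments. Unset Strict Implicit. Unset Printing Implicit Defensive.
Import Order.TTheory GRing.Theory Num.Theory.
Local Open Scope classical_set_scope.
Local Open Scope ring_scope.

(* Pointedness is needed for MathComp-Analysis' generated sigma-algebra;
   for empty X there are no probability measures, so nothing is lost. *)
#[short(type="ptMetricType")]
HB.structure Definition PointedMetric (K : numDomainType) :=
  { M of Metric K M & Pointed M }.

Definition borel {R : realType} (X : ptMetricType R) := g_sigma_algebraType (@open X).

Section defs.
Context {R : realType} (X : ptMetricType R).

Definition f_invariant (f : X -> X) (mu : probability (borel X) R) : Prop :=
  forall A : set (borel X), measurable A -> mu (f @^-1` A) = mu A.

Definition f_ergodic (f : X -> X) (mu : probability (borel X) R) : Prop :=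
  f_invariant f mu /\
  forall A : set (borel X), measurable A -> f @^-1` A = A ->
    mu A = 0%E \/ mu A = 1%E.

Definition bowen_ball (f : X -> X) (n : nat) (x : X) (eps : R) : set X :=
  [set y | forall i, (i < n)%N -> mdist (iter i f x) (iter i f y) < eps].

Definition N_cover (f : X -> X) (n : nat) (eps delta : R)
    (nu : probability (borel X) R) : R :=
  inf [set (size s)%:R | s in
        [set s : seq X |
          ((1 - delta)%:E < nu (\bigcup_(x in [set` s]) bowen_ball f n x eps))%E]].

Definition weak_star_basic_nbhs (nu : probability (borel X) R)
    (k : nat) (g : 'I_k -> X -> R) (e : R) (mu : probability (borel X) R) : Prop :=
  forall i : 'I_k,
    (`| (\int[mu]_(x in setT) (g i x)%:E) - (\int[nu]_(x in setT) (g i x)%:E) |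
      < e%:E)%E.

End defs.

(* Main.v *)
Require Import Defs.
From HB Require Import structures.
From mathcomp Require Import all_boot all_order all_algebra.
From mathcomp Require Import all_classical all_reals all_analysis.
From mathcomp Require Import lra measurable_realfun.
Import Order.TTheory GRing.Theory Num.Theory numFieldNormedType.Exports.
Local Open Scope classical_set_scope.
Local Open Scope ring_scope.

Section helpers.
Context {R : realType} {X : ptMetricType R}.

Lemma mdist_tri (a y z : X) : mdist a z <= mdist a y + mdist y z.
Proof.
apply/ler_addgt0Pr => e e0.
have h1 : ball a (mdist a y + e/2) y by rewrite ballEmdist /= ltrDl divr_gt0.
have h2 : ball y (mdist y z + e/2) z by rewrite ballEmdist /= ltrDl divr_gt0.
have := ball_triangle h1 h2; rewrite ballEmdist /= => H.
lra.
Qed.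

Lemma mdist_cont (a : X) : continuous (fun y : X => mdist a y).
Proof.
move=> y; apply/cvgrPdist_lt => e e0.
near=> z. have yz : mdist y z < e.
  near: z; by move: (nbhsx_ballx y e e0); rewrite ballEmdist.
have t1 := mdist_tri a y z; have t2 := mdist_tri a z y.
rewrite (metric_sym z y) in t2.
rewrite ltr_norml; apply/andP; split; lra.
Unshelve. all: by end_near.
Qed.

Lemma iter_cont (f : X -> X) : continuous f -> forall i, continuous (iter i f).
Proof.
move=> fc; elim=> [|i IH] y; first exact: cvg_id.
rewrite (_ : iter i.+1 f = f \o iter i f) //.
apply: continuous_comp; [exact: IH | exact: fc].
Qed.

Definition fmax {A : Type} (r : seq A) (F : A -> X -> R) (y : X) : R :=
  foldr (fun a acc => Num.max (F a y) acc) 0 r.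

Lemma fmax_cont (A : Type) (r : seq A) F : (forall a, continuous (F a)) ->
  continuous (fmax r F).
Proof.
move=> Fc; elim: r => [|a r IH] /=; first exact: cst_continuous.
rewrite (_ : fmax (a :: r) F = F a \max fmax r F) //.
by move=> y; apply: continuous_max; [exact: Fc | exact: IH].
Qed.

Lemma fmax_lt (A : eqType) (r : seq A) F e y :
  (fmax r F y < e) <-> (0 < e /\ forall a, a \in r -> F a y < e).
Proof.
elim: r => [|a r IH] /=; first by split=> [H|[]//]; split.
rewrite gt_max; split.
  move=> /andP[H1 /IH[H2 H3]]; split => // b; rewrite in_cons => /orP[/eqP->//|].
  exact: H3.
move=> [H1 H2]; apply/andP; split; first by apply: H2; rewrite mem_head.
by apply/IH; split => // b br; apply: H2; rewrite in_cons br orbT.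
Qed.

Lemma fmax_gt0 (A : eqType) (r : seq A) F y :
  (0 < fmax r F y) <-> exists2 a, a \in r & 0 < F a y.
Proof.
elim: r => [|a r IH] /=; first by split=> [|[]//]; rewrite ltxx.
rewrite lt_max; split.
  move=> /orP[H|/IH[b H1 H2]]; first by exists a => //; rewrite mem_head.
  by exists b => //; rewrite in_cons H1 orbT.
move=> [b]; rewrite in_cons => /orP[/eqP-> ->//|br Fb].
by apply/orP; right; apply/IH; exists b.
Qed.

Lemma fmax_ge0 (A : Type) (r : seq A) F y : 0 <= fmax r F y.
Proof. by elim: r => [|a r IH] //=; rewrite le_max IH orbT. Qed.


Lemma bb_center (f : X -> X) n x eps : 0 < eps -> bowen_ball f n x eps x.
Proof.
move=> e0 i _; have := ball_center x (PosNum e0); rewrite ballEmdist /=.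
by rewrite (mdistxx (iter i f x)) .
Qed.

Definition Dx (f : X -> X) n (x y : X) :=
  fmax (iota 0 n) (fun i z => mdist (iter i f x) (iter i f z)) y.

Lemma bb_eq (f : X -> X) n x eps y : 0 < eps ->
  bowen_ball f n x eps y <-> Dx f n x y < eps.
Proof.
move=> e0; rewrite /Dx fmax_lt; split.
  by move=> H; split => // i; rewrite mem_iota add0n => /andP[_ /H].
by move=> [_ H] i ilt; apply: H; rewrite mem_iota add0n.
Qed.

Lemma Dx_cont (f : X -> X) n x : continuous f -> continuous (Dx f n x).
Proof.
move=> fc; apply: fmax_cont => i y.
apply: (@continuous_comp _ _ _ (iter i f) (fun z => mdist (iter i f x) z)).
  exact: iter_cont.
exact: mdist_cont.
Qed.

Lemma bb_open (f : X -> X) n x eps : 0 < eps -> continuous f ->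
  open (bowen_ball f n x eps).
Proof.
move=> e0 fc.
have -> : bowen_ball f n x eps = Dx f n x @^-1` [set r | r < eps].
  by apply/seteqP; split => y /=; rewrite bb_eq.
move: (Dx_cont f n x fc) => /continuousP; apply; exact: open_lt.
Qed.

Lemma open_mble (U : set X) : open U -> measurable (U : set (borel X)).
Proof. by move=> oU; apply: sub_sigma_algebra. Qed.

Lemma cont_mble (g : X -> R) : continuous g ->
  measurable_fun (setT : set (borel X)) g.
Proof.
move=> gc; apply: (measurability _ (RGenOpens.measurableE R)).
move=> _ [_ [a [b ->] <-]]; rewrite setTI; apply: open_mble.
move: gc => /continuousP; apply; exact: interval_open.
Qed.

Local Open Scope ereal_scope.

Lemma int_upper (P : probability (borel X) R) (g : X -> R) (A : set X) :
  measurable (A : set (borel X)) -> measurable_fun (setT : set (borel X)) g ->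
  (forall y, (0 <= g y)%R) -> (forall y, (g y <= \1_A y)%R) ->
  \int[P]_(x in setT) (g x)%:E <= P A.
Proof.
move=> mA mg g0 gA.
rewrite -(setIT A) -integral_indic //; apply: ge0_le_integral => //.
- by move=> y _; rewrite lee_fin.
- exact/measurable_EFinP.
- by apply/measurable_EFinP; exact: measurable_indic.
- by move=> y _; rewrite lee_fin.
Qed.

Lemma int_lower (P : probability (borel X) R) (g : X -> R) (A : set X) :
  measurable (A : set (borel X)) -> measurable_fun (setT : set (borel X)) g ->
  (forall y, (\1_A y <= g y)%R) ->
  P A <= \int[P]_(x in setT) (g x)%:E.
Proof.
move=> mA mg gA.
rewrite -(setIT A) -integral_indic //; apply: ge0_le_integral => //.
- by apply/measurable_EFinP; exact: measurable_indic.
- exact/measurable_EFinP.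
- by move=> y _; rewrite lee_fin.
Qed.

End helpers.

Theorem lemma4p3 (R : realType) (X : ptMetricType R) (f : X -> X)
    (Xcompact : compact [set: X]) (fcont : continuous f)
    (eps delta : R) (n : nat)
    (eps_gt0 : 0 < eps) (delta_gt0 : 0 < delta) (delta_lt1 : delta < 1) :
  forall nu : probability (borel X) R, f_ergodic f nu ->
  forall c : R, N_cover f n eps delta nu < c ->
  exists (k : nat) (g : 'I_k -> X -> R) (e : R),
    0 < e /\ (forall i, continuous (g i)) /\
    forall mu : probability (borel X) R, f_ergodic f mu ->
      weak_star_basic_nbhs nu g e mu -> N_cover f n eps delta mu < c.
Proof.
move=> nu _ c Nc.
pose P (mu : probability (borel X) R) := [set s : seq X |
  ((1 - delta)%:E < mu (\bigcup_(x in [set` s]) bowen_ball f n x eps))%E].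
have NE mu : N_cover f n eps delta mu = inf [set (size s)%:R | s in P mu] by [].
have [s1 s1cov] : exists s : seq X,
    \bigcup_(x in [set` s]) bowen_ball f n x eps = setT.
  move: Xcompact; rewrite compact_cover.
  move=> /(_ X setT (fun x => bowen_ball f n x eps)) H.
  have [F _ HF] := H (fun x _ => bb_open f n x eps eps_gt0 fcont)
    (fun y _ => ex_intro2 setT (fun i => bowen_ball f n i eps y) y I (bb_center f n y eps eps_gt0)).
  exists (finmap.enum_fset F); apply/seteqP; split => // y _.
have nuP : P nu s1.
  by rewrite /P /= s1cov probability_setT lte_fin; lra.
have [_ [s0 Ps0 <-] s0c] : exists2 y, [set (size s)%:R | s in P nu] y & y < c.
  by apply: inf_lt; [exists (size s1)%:R; exists s1 | rewrite -NE].
pose H y := fmax s0 (fun x z => eps - Dx f n x z) y.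
have Hc : continuous H.
  apply: fmax_cont => x z; apply: continuousB; first exact: cst_continuous.
  exact: Dx_cont.
have H0 y : 0 <= H y by exact: fmax_ge0.
pose U := [set y : X | 0 < H y].
have hU : \bigcup_(x in [set` s0]) bowen_ball f n x eps = U.
  apply/seteqP; split => y /=.
    move=> [x xs0 bx]; apply/fmax_gt0; exists x => //.
    by rewrite subr_gt0; apply/bb_eq.
  move=> /fmax_gt0 [x xs0]; rewrite subr_gt0 => Dlt; exists x => //.
  exact/bb_eq.
pose V (m : nat) := [set y : X | 1 < m.+1%:R * H y].
have oU : open U by move: Hc => /continuousP /(_ [set r | 0 < r] (@open_gt R 0)).
have oV m : open (V m).
  have : continuous (fun y => m.+1%:R * H y).
    by move=> y; apply: (continuousM (s:=fun=> m.+1%:R) (t:=H)); [exact: cst_continuous | exact: Hc].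
  by move=> /continuousP /(_ [set r | 1 < r] (@open_gt R 1)).
have ndV : nondecreasing_seq (V : nat -> set (borel X)).
  move=> m k mk; apply/subsetPset => y /= Hy; apply: lt_le_trans Hy _.
  by apply: ler_wpM2r => //; rewrite ler_nat.
have VU : \bigcup_m V m = U.
  apply/seteqP; split => y /=.
    move=> [m _ /= Hm]; rewrite /U /= lt_def H0 andbT; apply/eqP => H0'.
    have Hm' : 1 < m.+1%:R * H y := Hm.
    by rewrite H0' mulr0 ltr10 in Hm'.
  move=> Hy; exists (Num.Def.trunc (H y)^-1) => //=.
  have := truncnS_gt (H y)^-1; rewrite -div1r ltr_pdivrMr //.
have := nondecreasing_cvg_mu (R:=R) (mu:=nu) (fun m => open_mble _ (oV m)) _ ndV.
rewrite VU => /(_ (open_mble _ oU)) cv.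
have nuU : ((1 - delta)%:E < nu U)%E by rewrite -hU.
have [m _ Hm] := cv _ (open_ereal_gt' nuU).
have {Hm} nuV : ((1 - delta)%:E < nu (V m))%E := Hm m (leqnn m).
have muP (mu : probability (borel X) R) (A : set X) : measurable (A : set (borel X)) ->
    mu A = (fine (mu A))%:E.
  move=> mA; rewrite fineK // ge0_fin_numE //.
  exact: le_lt_trans (probability_le1 mu mA) (ltry 1).
pose g y := Num.min 1 (m.+1%:R * H y).
have gc : continuous g.
  move=> y; apply: (continuous_min (f:=fun=> 1) (g:=fun y => m.+1%:R * H y)).
    exact: cst_continuous.
  apply: (continuousM (s:=fun=> m.+1%:R) (t:=H)); [exact: cst_continuous | exact: Hc].
have mg := cont_mble _ gc.
have g0 y : 0 <= g y by rewrite le_min ler01 mulr_ge0.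
have gU y : g y <= \1_U y.
  rewrite indicE; case: (boolP (y \in U)) => [_|yU]; first by rewrite ge_min lexx.
  have Hy0 : H y = 0.
    apply/eqP; rewrite eq_le H0 andbT leNgt; apply/negP => Hy.
    by move: yU; rewrite notin_setE; apply.
  by rewrite /g Hy0 mulr0 ge_min lexx orbT.
have gV y : \1_(V m) y <= g y.
  rewrite indicE; case: (boolP (y \in V m)) => [|_]; last exact: g0.
  rewrite inE /= => Hy; rewrite le_min lexx /=; exact: ltW.
pose e := fine (nu (V m)) - (1 - delta).
have mVm := open_mble _ (oV m); have mU := open_mble _ oU.
have e0 : 0 < e.
  by move: nuV; rewrite (muP nu _ mVm) lte_fin /e subr_gt0.
exists 1, (fun _ => g), e; split => //; split => // mu _ /(_ ord0) Hw.
rewrite NE.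
apply: le_lt_trans s0c.
apply: ge_inf; first by exists 0 => _ [s _ <-]; rewrite ler0n.
exists s0 => //.
rewrite /P /= hU.
have I1 := int_upper mu g U mU mg g0 gU.
have I2 := int_lower nu g (V m) mVm mg gV.
have I1' := int_upper nu g U mU mg g0 gU.
have Ig0 (P0 : probability (borel X) R) : (0 <= \int[P0]_(x in setT) (g x)%:E)%E.
  by apply: integral_ge0 => y _; rewrite lee_fin.
have afin : (\int[mu]_(x in setT) (g x)%:E)%E \is a fin_num.
  rewrite ge0_fin_numE //; apply: le_lt_trans I1 _.
  exact: le_lt_trans (probability_le1 mu mU) (ltry 1).
have bfin : (\int[nu]_(x in setT) (g x)%:E)%E \is a fin_num.
  rewrite ge0_fin_numE //; apply: le_lt_trans I1' _.
  exact: le_lt_trans (probability_le1 nu mU) (ltry 1).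
have Hw' : (`|\int[mu]_(x in setT) (g x)%:E - \int[nu]_(x in setT) (g x)%:E| < e%:E)%E := Hw.
move: Hw' I1 I2.
rewrite -(fineK afin) -(fineK bfin) (muP mu _ mU) (muP nu _ mVm) /e.
rewrite -EFinB /= !lte_fin !lee_fin ltr_norml => /andP[h1 h2] h3 h4.
lra.
Qed.
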